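(* Let $r\geq 1$, $k\geq 3$, $1\le d\le r$, and let $I_d\subseteq\{1,\dots,r\}$ with $|I_d|=d$. Then for every $n\geq k+1$, every $m$ with $2\leq m\leq k-1$, and every $\phi\in T_{k,r}^m(I_d)$, $$\bigl|S_n^{(r)}\bigl(T_{k,r}^m(I_d);\phi\bigr)\bigr|=\prod_{j=k+1}^n\bigl(d(k-1)+(r-d)j\bigr).$$
   Context: For $n,r\ge1$, $S_n^{(r)}$ denotes the set of coloured permutations of length $n$ with $r$ colours: sequences $\phi=(\phi_1,\dots,\phi_n)$ where $\phi_i=a_i^{(c_i)}$, $(a_1,\dots,a_n)$ is a permutation of $\{1,\dots,n\}$ and each $c_i\in\{1,\dots,r\}$ is the colour of $a_i$. For $\phi=(\tau_1^{(s_1)},\dots,\tau_k^{(s_k)})\in S_k^{(r)}$ and $\psi=(\alpha_1^{(v_1)},\dots,\alpha_n^{(v_n)})\in S_n^{(r)}$, an occurrence of $\phi$ in $\psi$ is a sequence of indices $1\le i_1<\dots<i_k\le n$ such that $(\alpha_{i_1},\dots,\alpha_{i_k})$ is order-isomorphic to $(\tau_1,\dots,\tau_k)$ and $v_{i_j}=s_j$ for all $j$. $\psi$ contains $\phi$ if there is at least one occurrence, and avoids $\phi$ otherwise; $\psi$ contains $\phi$ exactly once if there is exactly one occurrence. For $I_d\subseteq\{1,\dots,r\}$ with $|I_d|=d$ and $1\le m\le k$, $T_{k,r}^m(I_d)$ is the set of all $\phi\in S_k^{(r)}$ whose first entry is $\phi_1=m^{(c)}$ for some colour $c\in I_d$.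 For $\phi\in T_{k,r}^m(I_d)$, $S_n^{(r)}(T_{k,r}^m(I_d);\phi)$ denotes the set of $\psi\in S_n^{(r)}$ that avoid every pattern in $T_{k,r}^m(I_d)\setminus\{\phi\}$ and contain $\phi$ exactly once. *)

(* Defs.v *)
From mathcomp Require Import all_boot all_fingroup.
Set Implicit Arguments. Unset Strict Implicit. Unset Printing Implicit Defensive.

(* A coloured permutation of length n with r colours: the underlying
   permutation (values 0..n-1, i.e. value v stands for v+1) together with a
   colouring of the positions (colour c : 'I_r stands for colour c+1).
   phi_i = (a_i)^(c_i) with a_i = psi.1 i + 1, c_i = psi.2 i + 1. *)
Definition cperm (n r : nat) : finType :=
  ({perm 'I_n} * {ffun 'I_n -> 'I_r})%type.

Definition is_occ (k n r : nat) (phi : cperm k r) (psi : cperm n r)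
    (f : {ffun 'I_k -> 'I_n}) : bool :=
  [&& [forall i : 'I_k, forall j : 'I_k, (i < j) ==> (f i < f j)],
      [forall i : 'I_k, forall j : 'I_k,
         (psi.1 (f i) < psi.1 (f j)) == (phi.1 i < phi.1 j)] &
      [forall i : 'I_k, psi.2 (f i) == phi.2 i]].

Definition num_occ (k n r : nat) (phi : cperm k r) (psi : cperm n r) : nat :=
  #|[pred f : {ffun 'I_k -> 'I_n} | is_occ phi psi f]|.

(* phi \in T^m_{k,r}(I): first entry is m^(c) with c \in I
   (value m is stored as m-1, position 1 is index 0). *)
Definition inT (k r m : nat) (I : {set 'I_r}) (phi : cperm k r) : bool :=
  [exists i : 'I_k, [&& val i == 0, val (phi.1 i) == m.-1 & phi.2 i \in I]].

Definition Sset (n k r m : nat) (I : {set 'I_r}) (phi : cperm k r)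
  : {set cperm n r} :=
  [set psi : cperm n r | (num_occ phi psi == 1) &&
     [forall phi' : cperm k r,
        (inT m I phi' && (phi' != phi)) ==> (num_occ phi' psi == 0)]].

(* Main.v *)
Require Import Defs.
From mathcomp Require Import all_boot all_fingroup zify.
Set Implicit Arguments. Unset Strict Implicit. Unset Printing Implicit Defensive.

Lemma card_ordP N (P : pred nat) : #|[set j : 'I_N | P j]| = count P (iota 0 N).
Proof.
rewrite cardsE cardE /enum_mem size_filter -val_enum_ord count_map enumT.
by apply: eq_count.
Qed.

Lemma count_lt x N : count (fun a => a < x) (iota 0 N) = minn x N.
Proof.
elim: N => [|N IH]; first by rewrite minn0.
rewrite -addn1 iotaD count_cat IH /= add0n addn0.
case: (ltnP N x) => H; lia.
Qed.

Lemma count_itv lo hi N : lo <= hi <= N ->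
  count (fun a => (lo <= a) && (a < hi)) (iota 0 N) = hi - lo.
Proof.
move=> /andP [H1 H2].
have E : count (fun a => a < hi) (iota 0 N) =
   count (fun a => a < lo) (iota 0 N) + count (fun a => (lo <= a) && (a < hi)) (iota 0 N).
  rewrite -count_predUI.
  have -> : count (predI (fun a => a < lo) (fun a => (lo <= a) && (a < hi))) (iota 0 N) = 0.
    by apply/eqP; rewrite -leqn0 leqNgt -has_count; apply/hasP => -[a _ /= /andP [H3 /andP [H4 _]]]; lia.
  rewrite addn0; apply: eq_count => a /=; case: (ltnP a lo) => H3 //=; lia.
move: E; rewrite !count_lt; lia.
Qed.

Lemma card_itv N lo hi : lo <= hi <= N ->
  #|[set j : 'I_N | (lo <= j) && (j < hi)]| = hi - lo.
Proof. move=> H; by rewrite (card_ordP N (fun a => (lo <= a) && (a < hi))) count_itv. Qed.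

Lemma card_lt N x : x <= N -> #|[set j : 'I_N | j < x]| = x.
Proof.
move=> H; rewrite (card_ordP N (fun a => a < x)) count_lt; lia.
Qed.

Lemma card_gt N x : x < N -> #|[set j : 'I_N | x < j]| = N - x.+1.
Proof.
move=> H; rewrite -(card_itv (N := N) (lo := x.+1) (hi := N)); last lia.
apply: eq_card => j; rewrite !inE (ltn_ord j) andbT. done.
Qed.

Lemma rank_perm N (p : {perm 'I_N}) (i : 'I_N) : #|[set j | p j < p i]| = p i.
Proof.
have -> : [set j | p j < p i] = p @^-1: [set v : 'I_N | v < p i].
  by apply/setP => j; rewrite !inE.
by rewrite card_preimset ?card_lt //; [apply: ltnW | apply: perm_inj].
Qed.

Lemma perm_order_inj N (p q : {perm 'I_N}) :
  (forall i j, (p i < p j) = (q i < q j)) -> p = q.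
Proof.
move=> H; apply/permP => i; apply: val_inj => /=.
rewrite -rank_perm -(rank_perm q); apply: eq_card => j; by rewrite !inE H.
Qed.

Lemma card_split (T : finType) (A : {set T}) (g : T -> nat) (x : T) :
  injective g -> x \notin A ->
  #|[set y in A | g y < g x]| + #|[set y in A | g x < g y]| = #|A|.
Proof.
move=> Hg Hx; rewrite -(cardID [pred y | g y < g x] A).
congr (_ + _); apply: eq_card => y; rewrite !inE /=; first by rewrite andbC.
apply/andP/andP => [[H1 H2]|[H1 H2]]; split => //.
all: try by rewrite -leqNgt; apply: ltnW.
rewrite ltn_neqAle leqNgt H1 andbT; apply/negP => /eqP /Hg E.
by rewrite E H2 in Hx.
Qed.

Definition code N (p : {perm 'I_N}) (i : 'I_N) := #|[set j : 'I_N | i < j & p j < p i]|.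
Definition lcode N (p : {perm 'I_N}) (i : 'I_N) := #|[set j : 'I_N | i < j & p i < p j]|.

Lemma code_lcode N (p : {perm 'I_N}) (i : 'I_N) : code p i + lcode p i = N - i.+1.
Proof.
rewrite -card_gt // -(card_split (g := fun j => val (p j)) (x := i)).
- by congr (_ + _); apply: eq_card => j; rewrite !inE.
- by move=> a b /val_inj /perm_inj.
- by rewrite inE ltnn.
Qed.

Lemma lehmer_inj N (p q : {perm 'I_N}) : (forall i, code p i = code q i) -> p = q.
Proof.
move=> Hc.
suff H : forall t (i : 'I_N), i < t -> p i = q i.
  by apply/permP => i; apply: (H i.+1).
elim=> [|t IH] i Hi //.
case: (ltnP i t) => Hit; first by apply: IH.
have Eit : (i : nat) = t by lia.
have HV : forall v, (i <= (p^-1)%g v) = (i <= (q^-1)%g v).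
  have A1 : forall (a b : {perm 'I_N}), (forall j : 'I_N, j < i -> a j = b j) ->
     forall v, (a^-1)%g v < i -> (b^-1)%g v = (a^-1)%g v.
    move=> a b Hab v Hv; apply: (perm_inj (s := b)).
    by rewrite -(Hab _ Hv) !permKV.
  move=> v; case: (ltnP ((p^-1)%g v) i) => H1; case: (ltnP ((q^-1)%g v) i) => H2 //.
  - by rewrite (A1 p q _ v H1) in H2; [lia | move=> j Hj; apply: IH; lia].
  - by rewrite (A1 q p _ v H2) in H1; [lia | move=> j Hj; apply/esym/IH; lia].
have Cc : forall a : {perm 'I_N}, code a i =
   #|[set v : 'I_N | (i <= (a^-1)%g v) && (v < a i)]|.
  move=> a; rewrite /code -[RHS](card_preimset _ (@perm_inj _ a)).
  apply: eq_card => j; rewrite !inE permK.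
  case: (ltngtP i j) => // E; by rewrite (val_inj E) ltnn.
have key : forall a b : {perm 'I_N}, (forall v, (i <= (a^-1)%g v) = (i <= (b^-1)%g v)) ->
   a i < b i -> code a i < code b i.
  move=> a b Hab Hlt; rewrite !Cc; apply: proper_card; apply/properP; split.
    apply/subsetP => v; rewrite !inE Hab => /andP [-> H] /=; exact: ltn_trans H Hlt.
  exists (a i); first by rewrite inE -Hab permK leqnn Hlt.
  by rewrite inE ltnn andbF.
apply: val_inj; case: (ltngtP (p i) (q i)) => // E.
- by move: (key p q HV E); rewrite Hc ltnn.
- by move: (key q p (fun v => esym (HV v)) E); rewrite Hc ltnn.
Qed.

Section Pattern.
Variables (K : nat) (g : 'I_K -> nat).
Hypothesis Hg : injective g.
Definition rk (i : 'I_K) := #|[set j | g j < g i]|.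
Lemma rk_lt i j : (rk i < rk j) = (g i < g j).
Proof.
rewrite /rk; case: (ltnP (g i) (g j)) => H.
  apply: proper_card; apply/properP; split.
    apply/subsetP => l; rewrite !inE => H1; exact: ltn_trans H1 H.
  by exists i; rewrite !inE ?ltnn.
apply/negbTE; rewrite -leqNgt; apply: subset_leq_card; apply/subsetP => l.
rewrite !inE => H1; exact: leq_trans H1 H.
Qed.
Lemma rkK i : rk i < K.
Proof.
rewrite /rk -[X in _ < X]card_ord; apply: proper_card; apply/properP; split.
  exact: subset_predT.
by exists i; rewrite ?inE ?ltnn.
Qed.
Definition rkf := [ffun i => Ordinal (rkK i)].
Lemma rkf_inj : injective rkf.
Proof.
move=> i j; rewrite !ffunE => /(congr1 val) /= E.
apply: Hg; case: (ltngtP (g i) (g j)) => // H.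
- by move: H; rewrite -rk_lt E ltnn.
- by move: H; rewrite -rk_lt E ltnn.
Qed.
Lemma pattern_exists : exists p : {perm 'I_K}, forall i j, (p i < p j) = (g i < g j).
Proof.
exists (perm rkf_inj) => i j; rewrite !permE !ffunE. exact: rk_lt.
Qed.
End Pattern.

Definition incr K N (f : {ffun 'I_K -> 'I_N}) : bool :=
  [forall i : 'I_K, forall j : 'I_K, (i < j) ==> (f i < f j)].

Lemma incrP K N (f : {ffun 'I_K -> 'I_N}) (i j : 'I_K) : incr f -> i < j -> f i < f j.
Proof. by move=> /forallP /(_ i) /forallP /(_ j) /implyP. Qed.

Lemma incr_inj K N (f : {ffun 'I_K -> 'I_N}) : incr f -> injective f.
Proof.
move=> Hf i j E; apply: val_inj; case: (ltngtP i j) => // H.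
- by move: (incrP Hf H); rewrite E ltnn.
- by move: (incrP Hf H); rewrite E ltnn.
Qed.

Lemma incr_ge K N (f : {ffun 'I_K.+1 -> 'I_N}) (t : 'I_K.+1) :
  incr f -> f ord0 + t <= f t.
Proof.
move=> Hf.
suff H : forall p, p <= K -> f ord0 + p <= f (inord p).
  by move: (H t (ltn_ord t)); rewrite inord_val.
elim=> [|p IH] Hp.
  by rewrite addn0; have -> : (inord 0 : 'I_K.+1) = ord0 by apply: val_inj; rewrite /= inordK.
have := IH (ltnW Hp).
have : f (inord p) < f (inord p.+1).
  apply: incrP => //; rewrite !inordK //; lia.
lia.
Qed.

Lemma incr_le K N (f : {ffun 'I_K.+1 -> 'I_N}) (t : 'I_K.+1) :
  incr f -> f t + (K - t) <= f ord_max.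
Proof.
move=> Hf.
suff H : forall p, p <= K -> f (inord (K - p)) + p <= f ord_max.
  have := H (K - t) (leq_subr _ _).
  have -> : K - (K - t) = t by have := ltn_ord t; lia.
  by rewrite inord_val.
elim=> [|p IH] Hp.
  by rewrite subn0 addn0; have -> : (inord K : 'I_K.+1) = ord_max by apply: val_inj; rewrite /= inordK.
have := IH (ltnW Hp).
have : f (inord (K - p.+1)) < f (inord (K - p)).
  apply: incrP => //; rewrite !inordK; lia.
lia.
Qed.

Lemma subset_card_ex (T : finType) (S : {set T}) j :
  j <= #|S| -> exists A : {set T}, A \subset S /\ #|A| = j.
Proof.
elim: j => [|j IH] H; first by exists set0; rewrite sub0set cards0.
have [A [HA HAc]] := IH (ltnW H).
have : ~~ (S \subset A) by apply/negP => /subset_leq_card; lia.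
case/subsetPn => x HxS HxA.
exists (x |: A); split.
- by rewrite subUset sub1set HxS HA.
- by rewrite cardsU1 HxA HAc.
Qed.

Lemma two_subsets (T : finType) (S : {set T}) j : 1 <= j < #|S| ->
  exists A1 A2 : {set T}, exists x,
    [/\ A1 \subset S, A2 \subset S, #|A1| = j, #|A2| = j & (x \in A2) && (x \notin A1)].
Proof.
move=> /andP [H1 H2].
have [A [HA HAc]] := subset_card_ex (ltnW H2).
have : ~~ (S \subset A) by apply/negP => /subset_leq_card; lia.
case/subsetPn => x HxS HxA.
have : A != set0 by apply/negP => /eqP E; rewrite E cards0 in HAc; lia.
case/set0Pn => y Hy.
exists A, (x |: (A :\ y)), x; split => //.
- rewrite subUset sub1set HxS /=; apply: subset_trans HA; exact: subD1set.
- move: HAc; rewrite cardsU1 in_setD1 (negbTE HxA) andbF /= (cardsD1 y A) Hy. lia.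
- by rewrite setU11 HxA.
Qed.

Lemma card_via (A B : finType) (f : A -> B) (C : {set B}) (P : pred B) :
  injective f -> (forall t, f t \in C) -> (forall x, x \in C -> exists t, f t = x) ->
  #|[set t | P (f t)]| = #|[set x in C | P x]|.
Proof.
move=> Hf H1 H2; rewrite -(card_imset _ Hf); apply: eq_card => x.
rewrite inE; apply/imsetP/andP.
- by case=> t; rewrite inE => Ht ->.
- by case=> /H2 [t <-] Ht; exists t; rewrite ?inE.
Qed.

Section SetFun.
Variables (K N : nat) (C : {set 'I_N}) (x0 : 'I_N).
Hypothesis HC : #|C| = K.
Definition sC := sort (fun x y : 'I_N => x <= y) (enum C).
Definition fC : {ffun 'I_K -> 'I_N} := [ffun t : 'I_K => nth x0 sC t].
Lemma size_sC : size sC = K.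
Proof. by rewrite size_sort -cardE HC. Qed.
Lemma uniq_sC : uniq sC.
Proof. by rewrite sort_uniq enum_uniq. Qed.
Lemma mem_sC x : (x \in sC) = (x \in C).
Proof. by rewrite mem_sort mem_enum. Qed.
Lemma sorted_sC : sorted (fun x y : 'I_N => x <= y) sC.
Proof. apply: sort_sorted => x y; exact: leq_total. Qed.
Lemma fC_incr : incr fC.
Proof.
apply/forallP => i; apply/forallP => j; apply/implyP => Hij; rewrite !ffunE.
have H := sorted_leq_nth (leT := fun x y : 'I_N => x <= y)
   (fun y x z => @leq_trans y x z) (fun x => leqnn x) x0 sorted_sC.
rewrite ltn_neqAle H ?inE ?size_sC ?andbT //; last exact: ltnW.
rewrite val_eqE nth_uniq ?size_sC ?uniq_sC //.
by apply/negP => /eqP E; rewrite E ltnn in Hij.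
Qed.
Lemma fC_mem t : fC t \in C.
Proof. by rewrite ffunE -mem_sC mem_nth ?size_sC. Qed.
Lemma fC_onto x : x \in C -> exists t, fC t = x.
Proof.
move=> Hx; have Hi : index x sC < K by rewrite -size_sC index_mem mem_sC.
by exists (Ordinal Hi); rewrite ffunE /= nth_index ?mem_sC.
Qed.
End SetFun.

Lemma is_occP K N r (ph : cperm K r) (psi : cperm N r) f :
  is_occ ph psi f ->
  [/\ incr f, forall i j, (psi.1 (f i) < psi.1 (f j)) = (ph.1 i < ph.1 j)
    & forall i, psi.2 (f i) = ph.2 i].
Proof.
case/and3P => H1 /forallP H2 /forallP H3; split => //.
- by move=> i j; move: (H2 i) => /forallP /(_ j) /eqP.
- by move=> i; move: (H3 i) => /eqP.
Qed.

Lemma is_occI K N r (ph : cperm K r) (psi : cperm N r) f :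
  incr f -> (forall i j, (psi.1 (f i) < psi.1 (f j)) = (ph.1 i < ph.1 j)) ->
  (forall i, psi.2 (f i) = ph.2 i) -> is_occ ph psi f.
Proof.
move=> H1 H2 H3; apply/and3P; split => //.
- by apply/forallP => i; apply/forallP => j; rewrite H2.
- by apply/forallP => i; rewrite H3.
Qed.

Lemma inTP K r m (I : {set 'I_r}) (ph : cperm K.+1 r) :
  inT m I ph -> val (ph.1 ord0) = m.-1 /\ ph.2 ord0 \in I.
Proof.
case/existsP => i /and3P [/eqP H1 /eqP H2 H3].
have E : i = ord0 by apply: val_inj.
by rewrite -E; split.
Qed.

Lemma img_le a b (f : 'I_a -> 'I_b) (A : {set 'I_a}) (B : {set 'I_b}) :
  injective f -> (forall t, t \in A -> f t \in B) -> #|A| <= #|B|.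
Proof.
move=> Hf H; rewrite -(card_imset _ Hf); apply: subset_leq_card.
by apply/subsetP => x /imsetP [t Ht ->]; apply: H.
Qed.

Section Main.
Variables (n k r m : nat) (I : {set 'I_r}) (phi : cperm k.+1 r).
Hypotheses (Hm1 : 2 <= m) (Hm2 : m <= k) (Hkn : k < n) (HT : inT m I phi).
Implicit Types (psi : cperm n.+1 r) (f : {ffun 'I_k.+1 -> 'I_n.+1}).

Definition Occ (psi : cperm n.+1 r) : {set {ffun 'I_k.+1 -> 'I_n.+1}} :=
  [set f | [&& incr f, psi.2 (f ord0) \in I &
     #|[set t | psi.1 (f t) < psi.1 (f ord0)]| == m.-1]].

Lemma occ_T1 (ph : cperm k.+1 r) psi f : inT m I ph -> is_occ ph psi f -> f \in Occ psi.
Proof.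
move=> /inTP [H1 H2] /is_occP [H3 H4 H5].
rewrite inE H3 H5 H2 /=; apply/eqP.
transitivity #|[set t | ph.1 t < ph.1 ord0]|.
  by apply: eq_card => t; rewrite !inE H4.
by rewrite rank_perm.
Qed.

Lemma occ_T2 psi f : f \in Occ psi -> exists ph, inT m I ph /\ is_occ ph psi f.
Proof.
rewrite inE => /and3P [H1 H2 /eqP H3].
have Hg : injective (fun t => val (psi.1 (f t))).
  by move=> a b /val_inj /perm_inj /(incr_inj H1).
have [p Hp] := pattern_exists Hg.
exists (p, [ffun t => psi.2 (f t)]); split.
- apply/existsP; exists ord0; rewrite eqxx /= ffunE H2 andbT.
  rewrite -rank_perm -H3; apply/eqP; apply: eq_card => t; by rewrite !inE Hp.
- apply: is_occI => //= *; by rewrite ?Hp ?ffunE.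
Qed.

Lemma occ_uniq (ph1 ph2 : cperm k.+1 r) psi f :
  is_occ ph1 psi f -> is_occ ph2 psi f -> ph1 = ph2.
Proof.
case: ph1 ph2 => p1 c1 [p2 c2] /is_occP [_ A1 B1] /is_occP [_ A2 B2] /=.
congr pair.
- by apply: perm_order_inj => i j; rewrite -A1 A2.
- by apply/ffunP => i; rewrite -B1 B2.
Qed.

Lemma Sset_iff psi : (psi \in Sset n.+1 m I phi) <->
  (#|Occ psi| = 1 /\ forall f, f \in Occ psi -> is_occ phi psi f).
Proof.
rewrite inE; split.
- case/andP => /eqP H1 /forallP H2.
  have E : forall f, (f \in Occ psi) = is_occ phi psi f.
    move=> f; apply/idP/idP; last exact: occ_T1.
    case/occ_T2 => ph [Hph Hocc].
    case: (eqVneq ph phi) => [<- //|Hne].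
    move: (H2 ph); rewrite Hph Hne /= => /eqP /card0_eq /(_ f).
    by rewrite inE Hocc.
  split; last by move=> f; rewrite E.
  by rewrite -H1; apply: eq_card => f; rewrite E.
- case=> H1 H2.
  have E : forall f, (f \in Occ psi) = is_occ phi psi f.
    by move=> f; apply/idP/idP; [apply: H2 | apply: occ_T1].
  apply/andP; split.
    by rewrite /num_occ -H1; apply/eqP; apply: eq_card => f; rewrite inE E.
  apply/forallP => ph; apply/implyP => /andP [Hph Hne]; apply/eqP.
  apply: eq_card0 => f; rewrite inE; apply/negP => Hf.
  have := occ_uniq Hf (H2 f (occ_T1 Hph Hf)).
  by move=> E2; rewrite E2 eqxx in Hne.
Qed.



Definition f0 : {ffun 'I_k.+1 -> 'I_n.+1} := [ffun t : 'I_k.+1 => inord (n - k + t)].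

Lemma val_f0 t : (f0 t : nat) = n - k + t.
Proof. rewrite ffunE /= inordK //; have := ltn_ord t; lia. Qed.

Lemma f0_incr : incr f0.
Proof.
apply/forallP => i; apply/forallP => j; apply/implyP => H.
rewrite !val_f0; lia.
Qed.

Lemma f0_eq f : incr f -> (f ord0 : nat) = n - k -> f = f0.
Proof.
move=> Hf H0; apply/ffunP => t; apply: val_inj; rewrite /= val_f0.
have H1 := incr_ge t Hf; have H2 := incr_le t Hf.
have H3 := ltn_ord (f ord_max); have H4 := ltn_ord t.
lia.
Qed.

Lemma code_sum (psi : cperm n.+1 r) i : code psi.1 i + lcode psi.1 i = n - i.
Proof. by rewrite code_lcode subSS. Qed.

Lemma occ_start psi f : f \in Occ psi ->
  [/\ psi.2 (f ord0) \in I, m.-1 <= code psi.1 (f ord0),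
      k.+1 - m <= lcode psi.1 (f ord0) & f ord0 <= n - k].
Proof.
rewrite inE => /and3P [H1 H2 /eqP H3]; split => //.
- rewrite -H3; apply: (img_le (incr_inj H1)) => t; rewrite !inE => Ht.
  rewrite Ht andbT; apply: incrP => //.
  rewrite lt0n; apply/negP => /eqP E.
  have E2 : t = ord0 by apply: val_inj.
  by rewrite E2 ltnn in Ht.
- have Hg : injective (fun t => nat_of_ord (psi.1 (f t))).
    by move=> a b /val_inj /perm_inj /(incr_inj H1).
  have Hs : #|[set y in [set~ (ord0 : 'I_k.+1)] | psi.1 (f y) < psi.1 (f ord0)]|
     + #|[set y in [set~ (ord0 : 'I_k.+1)] | psi.1 (f ord0) < psi.1 (f y)]| = k.
    have := card_split (A := [set~ ord0]) Hg (x := ord0).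
    rewrite cardsC1 card_ord; apply; by rewrite !inE eqxx.
  have E1 : #|[set y in [set~ (ord0 : 'I_k.+1)] | psi.1 (f y) < psi.1 (f ord0)]| = m.-1.
    rewrite -H3; apply: eq_card => t; rewrite !inE.
    case E: (t == ord0) => //=; by rewrite (eqP E) ltnn.
  have E2 : #|[set y in [set~ (ord0 : 'I_k.+1)] | psi.1 (f ord0) < psi.1 (f y)]|
     <= lcode psi.1 (f ord0).
    apply: (img_le (incr_inj H1)) => t; rewrite !inE => /andP [Ht Hlt].
    rewrite Hlt andbT; apply: incrP => //; by rewrite lt0n.
  lia.
- have := incr_ge ord_max H1; have := ltn_ord (f ord_max); rewrite /= => ? ?; lia.
Qed.

Lemma code_tail psi t :
  code psi.1 (f0 t) = #|[set u : 'I_k.+1 | t < u & psi.1 (f0 u) < psi.1 (f0 t)]|.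
Proof.
rewrite /code -(card_imset _ (incr_inj f0_incr)); apply: eq_card => j.
rewrite inE; apply/andP/imsetP.
- case=> Hj Hlt.
  have Hj2 : j - (n - k) <= k by have := ltn_ord j; lia.
  exists (inord (j - (n - k))).
  + rewrite inE; apply/andP; split.
    * rewrite inordK; last lia. move: Hj; rewrite val_f0. lia.
    * have -> : f0 (inord (j - (n - k))) = j.
        apply: val_inj; rewrite /= val_f0 inordK; last lia.
        move: Hj; rewrite val_f0. lia.
      done.
  + apply: val_inj; rewrite /= val_f0 inordK; last lia.
    move: Hj; rewrite val_f0. lia.
- case=> u; rewrite inE => /andP [Hu Hlt] ->; split => //.
  exact: incrP f0_incr Hu.
Qed.

Lemma build psi i (A B : {set 'I_n.+1}) :
  psi.2 i \in I ->
  A \subset [set j : 'I_n.+1 | i < j & psi.1 j < psi.1 i] ->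
  B \subset [set j : 'I_n.+1 | i < j & psi.1 i < psi.1 j] ->
  #|A| = m.-1 -> #|B| = k.+1 - m ->
  exists f, [/\ f \in Occ psi, forall t, f t \in i |: (A :|: B) &
                 forall x, x \in i |: (A :|: B) -> exists t, f t = x].
Proof.
move=> Hc HA HB cA cB.
set C := i |: (A :|: B).
have HAB : forall x, x \in A :|: B -> i < x.
  move=> x; rewrite inE => /orP [/(subsetP HA)|/(subsetP HB)]; rewrite inE => /andP [] //.
have disj : #|A :&: B| = 0.
  apply: eq_card0 => x; rewrite !inE; apply/negP => /andP [/(subsetP HA) H1 /(subsetP HB) H2].
  move: H1 H2; rewrite !inE => /andP [_ H1] /andP [_ H2].
  by have := ltn_trans H1 H2; rewrite ltnn.
have HC : #|C| = k.+1.
  rewrite cardsU1 cardsU disj cA cB subn0.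
  have -> : i \notin A :|: B by apply/negP => /HAB; rewrite ltnn.
  lia.
pose f := fC k.+1 C i.
have Hinc : incr f := fC_incr i HC.
have Hmem : forall t, f t \in C := fun t => fC_mem i HC t.
have Hon : forall x, x \in C -> exists t, f t = x := fun x => fC_onto i HC (x := x).
have Hf0 : f ord0 = i.
  have [t Ht] := Hon i (setU11 _ _).
  apply/eqP; apply/negPn/negP => Hne.
  have : f ord0 \in A :|: B by move: (Hmem ord0); rewrite in_setU1 (negbTE Hne).
  move/HAB => H; have := incr_ge t Hinc; rewrite Ht => ?; lia.
exists f; split => //.
rewrite inE Hinc Hf0 Hc /=; apply/eqP.
transitivity #|[set x in C | psi.1 x < psi.1 i]|.
  exact: (card_via (fun x => psi.1 x < psi.1 i) (incr_inj Hinc) Hmem Hon).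
rewrite -cA; apply: eq_card => x; rewrite !inE.
apply/idP/idP.
- case/andP => /orP [/eqP ->|/orP [//|/(subsetP HB)]]; first by rewrite ltnn.
  rewrite inE => /andP [_ H1] H2; by have := ltn_trans H1 H2; rewrite ltnn.
- move=> Hx; rewrite Hx orbT /=.
  by move: (subsetP HA x Hx); rewrite inE => /andP [].
Qed.

Lemma two_occ psi i (A1 B1 A2 B2 : {set 'I_n.+1}) x : psi.2 i \in I ->
  A1 \subset [set j : 'I_n.+1 | i < j & psi.1 j < psi.1 i] ->
  B1 \subset [set j : 'I_n.+1 | i < j & psi.1 i < psi.1 j] ->
  #|A1| = m.-1 -> #|B1| = k.+1 - m ->
  A2 \subset [set j : 'I_n.+1 | i < j & psi.1 j < psi.1 i] ->
  B2 \subset [set j : 'I_n.+1 | i < j & psi.1 i < psi.1 j] ->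
  #|A2| = m.-1 -> #|B2| = k.+1 - m ->
  x \in A2 :|: B2 -> x \notin A1 :|: B1 -> 1 < #|Occ psi|.
Proof.
move=> Hc SA1 SB1 cA1 cB1 SA2 SB2 cA2 cB2 Hx2 Hx1.
have [f1 [O1 M1 _]] := build Hc SA1 SB1 cA1 cB1.
have [f2 [O2 _ N2]] := build Hc SA2 SB2 cA2 cB2.
have Hx : x \in i |: (A2 :|: B2) by rewrite in_setU1 Hx2 orbT.
have [t Ht] := N2 x Hx.
have Hne : f1 != f2.
  apply/negP => /eqP E; move: (M1 t); rewrite E Ht in_setU1 (negbTE Hx1) orbF => /eqP Exi.
  move: Hx2; rewrite Exi inE => /orP [/(subsetP SA2)|/(subsetP SB2)];
    by rewrite inE ltnn.
have Hsub : [set f1; f2] \subset Occ psi.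
  by apply/subsetP => g; rewrite in_set2 => /orP [/eqP -> | /eqP ->].
by have := subset_leq_card Hsub; rewrite cards2 Hne.
Qed.

Lemma occ_le1 psi i : #|Occ psi| <= 1 -> psi.2 i \in I ->
  m.-1 <= code psi.1 i -> k.+1 - m <= lcode psi.1 i ->
  code psi.1 i = m.-1 /\ lcode psi.1 i = k.+1 - m.
Proof.
move=> H1 Hc Hs Hl.
have Hs' : code psi.1 i <= m.-1.
  rewrite leqNgt; apply/negP => Hgt.
  have [A1 [A2 [x [SA1 SA2 cA1 cA2 /andP [xA2 xA1]]]]] :=
    @two_subsets _ [set j : 'I_n.+1 | i < j & psi.1 j < psi.1 i] m.-1
      (ltac:(rewrite /code in Hgt; apply/andP; split => //; lia)).
  have [B [SB cB]] := @subset_card_ex _ [set j : 'I_n.+1 | i < j & psi.1 i < psi.1 j] (k.+1 - m) Hl.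
  have Hx1 : x \notin A1 :|: B.
    rewrite in_setU (negbTE xA1) /=; apply/negP => /(subsetP SB).
    move: (subsetP SA2 x xA2); rewrite !inE => /andP [_ H2] /andP [_ H3].
    by have := ltn_trans H2 H3; rewrite ltnn.
  have := two_occ Hc SA1 SB cA1 cB SA2 SB cA2 cB (x := x) (ltac:(by rewrite in_setU xA2)) Hx1.
  lia.
have Hl' : lcode psi.1 i <= k.+1 - m.
  rewrite leqNgt; apply/negP => Hgt.
  have [B1 [B2 [x [SB1 SB2 cB1 cB2 /andP [xB2 xB1]]]]] :=
    @two_subsets _ [set j : 'I_n.+1 | i < j & psi.1 i < psi.1 j] (k.+1 - m)
      (ltac:(rewrite /lcode in Hgt; apply/andP; split => //; lia)).
  have [A [SA cA]] := @subset_card_ex _ [set j : 'I_n.+1 | i < j & psi.1 j < psi.1 i] m.-1 Hs.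
  have Hx1 : x \notin A :|: B1.
    rewrite in_setU (negbTE xB1) orbF; apply/negP => /(subsetP SA).
    move: (subsetP SB2 x xB2); rewrite !inE => /andP [_ H2] /andP [_ H3].
    by have := ltn_trans H2 H3; rewrite ltnn.
  have := two_occ Hc SA SB1 cA cB1 SA SB2 cA cB2 (x := x) (ltac:(by rewrite in_setU xB2 orbT)) Hx1.
  lia.
split; lia.
Qed.

Definition Phi (psi : cperm n.+1 r) : {ffun 'I_n.+1 -> 'I_n.+1 * 'I_r} :=
  [ffun i => (inord (code psi.1 i), psi.2 i)].

Definition Gf (i : 'I_n.+1) : {set 'I_n.+1 * 'I_r} :=
  if i < n - k then
    [set x : 'I_n.+1 * 'I_r | (x.1 <= n - i) && ((x.2 \in I) ==> ((x.1 < m.-1) || (n - i - x.1 < k.+1 - m)))]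
  else [set x : 'I_n.+1 * 'I_r | [exists t : 'I_k.+1,
     [&& (i : nat) == n - k + t, (x.1 : nat) == code phi.1 t & x.2 == phi.2 t]]].

Lemma code_le psi i : code psi.1 i <= n - i.
Proof. have ? := code_sum psi i; lia. Qed.

Lemma val_Phi1 psi i : ((Phi psi i).1 : nat) = code psi.1 i.
Proof.
rewrite ffunE /= inordK //.
exact: leq_ltn_trans (code_le psi i) (leq_ltn_trans (leq_subr _ _) (ltnSn n)).
Qed.

Lemma Phi2 psi i : (Phi psi i).2 = psi.2 i.
Proof. by rewrite ffunE. Qed.

Lemma code_phi psi : is_occ phi psi f0 -> forall t, code psi.1 (f0 t) = code phi.1 t.
Proof.
move=> /is_occP [_ H _] t; rewrite code_tail /code; apply: eq_card => u; by rewrite !inE H.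
Qed.

Lemma S2a psi : #|Occ psi| = 1 -> (forall f, f \in Occ psi -> is_occ phi psi f) ->
  Phi psi \in family Gf.
Proof.
move=> H1 H2.
have /cards1P [g Eg] : #|Occ psi| == 1 by rewrite H1.
have Hg : g \in Occ psi by rewrite Eg set11.
have [Hc Hs Hl Hi] := occ_start Hg.
have H1' : #|Occ psi| <= 1 by rewrite H1.
have [Es El] := occ_le1 H1' Hc Hs Hl.
have Hsum := code_sum psi (g ord0).
have Eg0 : (g ord0 : nat) = n - k.
  move: Es El Hsum Hi; set i0 := g ord0 => Es El Hsum Hi; lia.
have Hgf : g = f0 by apply: f0_eq => //; move: Hg; rewrite inE => /andP [].
have Hocc : is_occ phi psi f0 by rewrite -Hgf; apply: H2.
apply/familyP => i; rewrite /Gf; case: ifP => Hi'.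
- rewrite inE val_Phi1 Phi2 code_le /=; apply/implyP => Hci.
  apply/negPn/negP; rewrite negb_or -!leqNgt => /andP [Ha Hb].
  have Hl2 : k.+1 - m <= lcode psi.1 i.
    move: Hb (code_sum psi i); set c := code _ _; set l := lcode _ _ => Hb Hs'; lia.
  have [E1 E2] := occ_le1 H1' Hci Ha Hl2.
  move: Hi' E1 E2 (code_sum psi i); set j := i => Hi' E1 E2 Hs'; lia.
- have Hik : n - k <= i by rewrite leqNgt Hi'.
  have ? := ltn_ord i.
  have Ht : i - (n - k) < k.+1 by lia.
  rewrite inE; apply/existsP; set t := Ordinal Ht; exists t.
  have Ef : f0 t = i by apply: val_inj; rewrite /= val_f0 /=; lia.
  have [_ _ Hcol] := is_occP Hocc.
  by rewrite val_Phi1 Phi2 -Ef (code_phi Hocc) Hcol !eqxx !andbT val_f0.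
Qed.

Lemma S2b psi : Phi psi \in family Gf ->
  #|Occ psi| = 1 /\ (forall f, f \in Occ psi -> is_occ phi psi f).
Proof.
move/familyP => Hfam.
have Htail : forall t, code psi.1 (f0 t) = code phi.1 t /\ psi.2 (f0 t) = phi.2 t.
  move=> t; move: (Hfam (f0 t)); rewrite /Gf; case: ifP => H.
    by move: H; rewrite val_f0; lia.
  rewrite inE => /existsP [t' /and3P [/eqP E1 /eqP E2 /eqP E3]].
  have Et : t' = t by apply: val_inj => /=; move: E1; rewrite val_f0; lia.
  by subst; rewrite -val_Phi1 E2 -Phi2 E3.
have Hocc : is_occ phi psi f0.
  have Hg : injective (fun u => nat_of_ord (psi.1 (f0 u))).
    by move=> a b /val_inj /perm_inj /(incr_inj f0_incr).
  have [p Hp] := pattern_exists Hg.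
  have Ep : p = phi.1.
    apply: lehmer_inj => t; rewrite -(proj1 (Htail t)) code_tail /code.
    apply: eq_card => u; by rewrite !inE Hp.
  apply: is_occI; first exact: f0_incr.
  - by move=> i j; rewrite -Ep Hp.
  - by move=> t; exact: (proj2 (Htail t)).
have Hf0 : f0 \in Occ psi := occ_T1 HT Hocc.
have Hall : forall f, f \in Occ psi -> f = f0.
  move=> f Hf; have [Hc Hs Hl Hi] := occ_start Hf.
  apply: f0_eq; first by move: Hf; rewrite inE => /andP [].
  case: (ltnP (f ord0) (n - k)) => Hlt; last lia.
  move: (Hfam (f ord0)); rewrite /Gf Hlt inE val_Phi1 Phi2 Hc /= => /andP [_ H].
  move: Hs Hl H (code_sum psi (f ord0)); set i0 := f ord0;
    set c := code _ _; set l := lcode _ _ => Hs Hl H Hs'; case/orP: H => ?; lia.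
have -> : Occ psi = [set f0].
  apply/setP => f; rewrite in_set1; apply/idP/eqP => [/Hall //| ->]; exact: Hf0.
split; first by rewrite cards1.
by move=> f; rewrite in_set1 => /eqP ->.
Qed.

Lemma Phi_inj : injective Phi.
Proof.
move=> [p1 c1] [p2 c2] E.
have Hc : forall i, code p1 i = code p2 i.
  by move=> i; rewrite -(val_Phi1 (p1, c1)) -(val_Phi1 (p2, c2)) E.
have Hcol : forall i, c1 i = c2 i.
  by move=> i; rewrite -(Phi2 (p1, c1)) E Phi2.
by congr pair; [exact: lehmer_inj | apply/ffunP].
Qed.

Definition Fs (i : 'I_n.+1) : {set 'I_n.+1 * 'I_r} := [set x : 'I_n.+1 * 'I_r | x.1 <= n - i].

Lemma Phi_F psi : Phi psi \in family Fs.
Proof. by apply/familyP => i; rewrite inE val_Phi1 code_le. Qed.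

Lemma card_fam (F : 'I_n.+1 -> {set 'I_n.+1 * 'I_r}) :
  #|[set x : {ffun 'I_n.+1 -> 'I_n.+1 * 'I_r} | x \in family F]| = \prod_(i < n.+1) #|F i|.
Proof. by rewrite cardsE card_family foldrE big_map big_enum. Qed.

Lemma card_Fs i : #|Fs i| = (n - i).+1 * r.
Proof.
have -> : Fs i = setX [set a : 'I_n.+1 | a < (n - i).+1] [set: 'I_r].
  by apply/setP => -[a c]; rewrite !inE andbT.
rewrite cardsX card_lt ?cardsT ?card_ord //; have ? := ltn_ord i; lia.
Qed.

Lemma Phi_onto : [set Phi psi | psi in [set: cperm n.+1 r]] = [set x | x \in family Fs].
Proof.
apply/eqP; rewrite eqEcard; apply/andP; split.
  apply/subsetP => x /imsetP [psi _ ->]; rewrite inE; exact: Phi_F.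
rewrite card_imset; last exact: Phi_inj.
rewrite card_fam cardsT.
rewrite (eq_bigr (fun i : 'I_n.+1 => (n - i).+1 * r)); last by move=> i _; rewrite card_Fs.
rewrite big_split /= /cperm card_prod card_Sn card_ffun !card_ord.
have -> : \prod_(i < n.+1) (n - i).+1 = n.+1`!.
  rewrite -ffactnn ffact_prod; apply: eq_bigr => i _; have ? := ltn_ord i; lia.
by rewrite -(big_mkord xpredT (fun _ => r)) prod_nat_const_nat subn0.
Qed.

Lemma Gf_sub i : Gf i \subset Fs i.
Proof.
apply/subsetP => x; rewrite /Gf; case: ifP => Hi; rewrite !inE; first by case/andP.
case/existsP => t /and3P [/eqP E1 /eqP E2 _].
have H := code_lcode phi.1 t.
move: E1 E2 H; set c := code _ _; set l := lcode _ _ => E1 E2 H.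
rewrite E2; lia.
Qed.

Lemma Sset_img : [set Phi psi | psi in Sset n.+1 m I phi] = [set x | x \in family Gf].
Proof.
apply/setP => x; rewrite inE; apply/imsetP/idP.
- case=> psi /Sset_iff [H1 H2] ->; exact: S2a.
- move=> Hx.
  have : x \in [set x | x \in family Fs].
    rewrite inE; apply/familyP => i; apply: (subsetP (Gf_sub i)).
    exact: (familyP Hx i).
  rewrite -Phi_onto => /imsetP [psi _ Ex].
  exists psi => //; apply/Sset_iff; apply: S2b; by rewrite -Ex.
Qed.

Lemma card_Sset : #|Sset n.+1 m I phi| = \prod_(i < n.+1) #|Gf i|.
Proof. by rewrite -(card_imset _ Phi_inj) Sset_img card_fam. Qed.

Lemma card_Gf_tail (i : 'I_n.+1) : n - k <= i -> #|Gf i| = 1.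
Proof.
move=> Hi.
have ? := ltn_ord i.
have Ht : i - (n - k) < k.+1 by lia.
set t := Ordinal Ht.
have Hc : code phi.1 t < n.+1.
  have H := code_lcode phi.1 t.
  move: H; set c := code _ _; set l := lcode _ _ => H; lia.
rewrite -(cards1 ((inord (code phi.1 t) : 'I_n.+1), phi.2 t)); apply: eq_card => -[a c].
rewrite /Gf ltnNge Hi /= !inE xpair_eqE; apply/existsP/andP.
- case=> t' /and3P [/eqP E1 /eqP E2 /eqP E3].
  have Et : t' = t by apply: val_inj => /=; lia.
  subst t'; split; last by apply/eqP.
  by apply/eqP; apply: val_inj; rewrite /= inordK.
- case=> /eqP -> /eqP ->; exists t; rewrite inordK // !eqxx !andbT /=; apply/eqP; lia.
Qed.

Lemma card_pair (A B : finType) (P : A -> B -> bool) :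
  #|[set x : A * B | P x.1 x.2]| = \sum_(b : B) #|[set a | P a b]|.
Proof.
transitivity (\sum_(x : A * B) (P x.1 x.2 : nat)).
  rewrite -sum1_card big_mkcond /=; apply: eq_bigr => x _; by rewrite inE; case: (P _ _).
rewrite -(pair_bigA _ (fun a b => (P a b : nat))) exchange_big /=; apply: eq_bigr => b _.
rewrite -sum1_card [RHS]big_mkcond; apply: eq_bigr => a _; by rewrite inE; case: (P _ _).
Qed.

Lemma count_good M : k.+1 <= M <= n ->
  count (fun a => (a <= M) && ((a < m.-1) || (M - a < k.+1 - m))) (iota 0 n.+1) = k.
Proof.
move=> /andP [H1 H2].
pose p1 := fun a => (0 <= a) && (a < m.-1).
pose p2 := fun a => (M - k + m <= a) && (a < M.+1).
have E : count (fun a => (a <= M) && ((a < m.-1) || (M - a < k.+1 - m))) (iota 0 n.+1)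
   = count (predU p1 p2) (iota 0 n.+1).
  apply: eq_count => a; rewrite /= /p1 /p2.
  case H3: (a <= M); case H4: (a < m.-1); case H5: (M - a < k.+1 - m);
    case H6: (M - k + m <= a); case H7: (a < M.+1) => //=; lia.
have E2 : count (predI p1 p2) (iota 0 n.+1) = 0.
  apply/eqP; rewrite -leqn0 leqNgt -has_count; apply/hasP => -[a _].
  rewrite /= /p1 /p2 => /andP [/andP [_ H3] /andP [H4 _]]; lia.
have := count_predUI p1 p2 (iota 0 n.+1).
rewrite E2 addn0 -E /p1 /p2 !count_itv; lia.
Qed.

Lemma card_Gf_nt (i : 'I_n.+1) : i < n - k -> #|Gf i| = #|I| * k + (r - #|I|) * (n - i).+1.
Proof.
move=> Hi; rewrite /Gf Hi.
rewrite (card_pair (fun (a : 'I_n.+1) (c : 'I_r) =>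
   (a <= n - i) && ((c \in I) ==> ((a < m.-1) || (n - i - a < k.+1 - m))))).
rewrite (eq_bigr (fun c : 'I_r => if c \in I then k else (n - i).+1)); last first.
  move=> c _; case: (boolP (c \in I)) => Hc /=.
  - transitivity #|[set a : 'I_n.+1 | (a <= n - i) && ((a < m.-1) || (n - i - a < k.+1 - m))]|.
      by apply: eq_card => a; rewrite !inE.
    rewrite (card_ordP _ (fun a => (a <= n - i) && ((a < m.-1) || (n - i - a < k.+1 - m)))).
    by apply: count_good; have ? := ltn_ord i; lia.
  - transitivity #|[set a : 'I_n.+1 | a < (n - i).+1]|.
      by apply: eq_card => a; rewrite !inE andbT.
    by rewrite card_lt //; have ? := ltn_ord i; lia.
rewrite (bigID (mem I)) /=.
rewrite (eq_bigr (fun _ => k)); last by move=> c ->.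
rewrite (eq_bigl (mem (~: I)) (fun _ => if _ \in I then _ else _)); last by move=> c; rewrite !inE.
rewrite [X in _ + X](eq_bigr (fun _ => (n - i).+1)); last first.
  move=> c Hc; have Hc' : c \in ~: I := Hc.
  by move: Hc'; rewrite inE => /negbTE ->.
rewrite !sum_nat_const.
have := cardsC I; rewrite card_ord => Hr.
have -> : #|~: I| = r - #|I| by move: Hr; set a := #|I|; set b := #|~: I|; lia.
done.
Qed.


Lemma main_count : #|Sset n.+1 m I phi| = \prod_(k.+2 <= j < n.+2) (#|I| * k + (r - #|I|) * j).
Proof.
rewrite card_Sset.
rewrite (eq_bigr (fun i : 'I_n.+1 => if i < n - k then #|I| * k + (r - #|I|) * (n - i).+1 else 1)); last first.
  move=> i _; case: ifP => H; first by rewrite card_Gf_nt.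
  by rewrite card_Gf_tail // leqNgt H.
rewrite -(big_mkord xpredT (fun i => if i < n - k then #|I| * k + (r - #|I|) * (n - i).+1 else 1)).
rewrite (big_cat_nat _ (n := n - k)) //=; last lia.
rewrite [X in _ * X]big_nat_cond [X in _ * X]big1 ?muln1; last first.
  by move=> i /andP [/andP [H _] _]; rewrite ltnNge H.
rewrite (eq_big_nat _ _ (F2 := fun i => #|I| * k + (r - #|I|) * (n - i).+1)); last first.
  by move=> i /andP [_ ->].
rewrite big_nat_rev /= add0n.
rewrite -{1}(add0n k.+2) big_addn subSS.
apply: eq_big_nat => i /andP [_ Hi]; congr (_ + _ * _); lia.
Qed.

End Main.

Unset Implicit Arguments.

Theorem theorem3 (r k d : nat) (I : {set 'I_r}) :
  1 <= r -> 3 <= k -> 1 <= d <= r -> #|I| = d ->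
  forall (n m : nat) (phi : cperm k r),
    k + 1 <= n -> 2 <= m <= k - 1 -> inT m I phi ->
    #|Sset n m I phi| = \prod_(k + 1 <= j < n + 1) (d * (k - 1) + (r - d) * j).
Proof.
move=> Hr Hk Hd HI n m phi Hn /andP [Hm1 Hm2] HT.
case: k Hk phi HT Hm2 Hn => [//|k] Hk phi HT Hm2 Hn.
case: n Hn => [|n] Hn; first lia.
have Hm2' : m <= k by lia.
have Hkn : k < n by lia.
rewrite (main_count Hm1 Hm2' Hkn HT) HI !addn1 subn1.
done.
Qed.
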